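(* Let $a\ge2$ be an integer and $G=\langle x,y\mid x^a=y^a\rangle$, which is a Garside group with Garside element $\Delta=x^a=y^a$ (central). Then (i) $x$ and $y$ are not conjugate in $G$ (although $x^a=y^a$ and both are periodic); (ii) there is no Garside structure on $G$ in which $x$ is a Garside element.
   Context: A Garside structure on a group $G$ is a triple $(G,G^+,\Delta)$ where $G$ is the group of fractions of a Garside monoid $G^+$ (an atomic, left and right cancellative monoid that is a lattice under both the prefix order and the suffix order) and $\Delta\in G^+$ is an element whose left and right divisors in $G^+$ coincide, form a finite set, and generate $G^+$; $\Delta$ is then called a Garside element. An element $g$ is periodic with respect to $\Delta$ if $g=1$ or $g^k$ is conjugate to $\Delta^\ell$ for some nonzero integers $k,\ell$. *)

(* Defs.v *)
From Stdlib Require Import List Arith.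
Import ListNotations.
Set Implicit Arguments.

Record Group := {
  carrier :> Type;
  gmul : carrier -> carrier -> carrier;
  gone : carrier;
  ginv : carrier -> carrier;
  gmul_assoc : forall a b c, gmul a (gmul b c) = gmul (gmul a b) c;
  gmul_1l : forall a, gmul gone a = a;
  gmul_1r : forall a, gmul a gone = a;
  gmul_Vl : forall a, gmul (ginv a) a = gone;
  gmul_Vr : forall a, gmul a (ginv a) = gone
}.

Arguments gmul {g} _ _.
Arguments gone {g}.
Arguments ginv {g} _.

Fixpoint gpow (G : Group) (g : G) (n : nat) : G :=
  match n with
  | 0 => gone
  | S n => gmul g (gpow G g n)
  end.
Arguments gpow {G} g n.

Definition gprod (G : Group) (l : list G) : G := fold_right gmul gone l.
Arguments gprod {G} l.

Inductive in_gen (G : Group) (S : G -> Prop) : G -> Prop :=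
| gen_one : in_gen G S gone
| gen_base : forall s, S s -> in_gen G S s
| gen_mul : forall g h, in_gen G S g -> in_gen G S h -> in_gen G S (gmul g h)
| gen_inv : forall g, in_gen G S g -> in_gen G S (ginv g).
Arguments in_gen {G} S _.

Definition is_hom (G H : Group) (f : G -> H) : Prop :=
  forall g h, f (gmul g h) = gmul (f g) (f h).
Arguments is_hom {G H} f.

(** (G, x, y) is a presentation of < x, y | x^a = y^a >: the relation holds,
    x and y generate G, and G has the universal property of the presented group. *)
Definition is_presentation (a : nat) (G : Group) (x y : G) : Prop :=
  gpow x a = gpow y a /\
  (forall g, in_gen (fun s => s = x \/ s = y) g) /\
  (forall (H : Group) (h1 h2 : H), gpow h1 a = gpow h2 a ->
     exists f : G -> H, is_hom f /\ f x = h1 /\ f y = h2).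
Arguments is_presentation a {G} x y.

Definition conjugate (G : Group) (g h : G) : Prop :=
  exists c : G, gmul (ginv c) (gmul g c) = h.
Arguments conjugate {G}.

Definition is_submonoid (G : Group) (M : G -> Prop) : Prop :=
  M gone /\ (forall p q, M p -> M q -> M (gmul p q)).
Arguments is_submonoid {G}.

Definition left_div (G : Group) (M : G -> Prop) (p q : G) : Prop :=
  M p /\ exists c, M c /\ gmul p c = q.
Arguments left_div {G}.

Definition right_div (G : Group) (M : G -> Prop) (p q : G) : Prop :=
  M p /\ exists c, M c /\ gmul c p = q.
Arguments right_div {G}.

Definition is_lattice (G : Group) (M : G -> Prop) (R : G -> G -> Prop) : Prop :=
  forall p q, M p -> M q ->
    (exists d, M d /\ R d p /\ R d q /\
       forall e, M e -> R e p -> R e q -> R e d) /\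
    (exists l, M l /\ R p l /\ R q l /\
       forall e, M e -> R p e -> R q e -> R l e).
Arguments is_lattice {G}.

Definition atomic (G : Group) (M : G -> Prop) : Prop :=
  forall m, M m -> exists N : nat,
    forall l : list G, (forall z, In z l -> M z /\ z <> gone) ->
      gprod l = m -> length l <= N.
Arguments atomic {G}.

(** (G, M, D) is a Garside structure on G: M is a Garside monoid (a submonoid of
    G, so cancellative; atomic; lattice for prefix and suffix orders) whose group
    of fractions is G, and D is a Garside element of M. *)
Definition garside_structure (G : Group) (M : G -> Prop) (D : G) : Prop :=
  is_submonoid M /\
  (forall g : G, exists p q, M p /\ M q /\ g = gmul p (ginv q)) /\
  atomic M /\
  is_lattice M (left_div M) /\
  is_lattice M (right_div M) /\
  M D /\
  (forall p, left_div M p D <-> right_div M p D) /\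
  (exists s : list G, forall p, left_div M p D -> In p s) /\
  (forall m, M m -> exists l : list G,
      (forall z, In z l -> left_div M z D) /\ gprod l = m).

Arguments garside_structure {G}.

(* Main.v *)
Require Import Defs.
From Stdlib Require Import List Arith.

Module ZaMod.
From mathcomp Require Import all_boot all_algebra.
Import GRing.Theory.
Local Open Scope ring_scope.
Definition ZaG (n : nat) : Defs.Group :=
  {| carrier := (ordinal n.+2); gmul := fun a b => a + b; gone := 0; ginv := fun a => - a;
     gmul_assoc := fun a b c => addrA a b c;
     gmul_1l := @add0r _; gmul_1r := @addr0 _; gmul_Vl := @addNr _; gmul_Vr := @addrN _ |}.

Lemma Za_pow (n k : nat) : @gpow (ZaG n) 1 k = (k%:R : (ordinal n.+2)).
Proof. elim: k => [|k IH] //=. by rewrite IH -[in RHS]natr1 addrC. Qed.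

Lemma Za_full (n : nat) : @gpow (ZaG n) 1 n.+2 = @gpow (ZaG n) 0 n.+2.
Proof.
rewrite Za_pow. have -> : @gpow (ZaG n) 0 n.+2 = 0.
  by elim: n.+2 => //= k ->; rewrite addr0.
by apply: val_inj; rewrite /= Zp_nat /= modnDm add1n modnn.
Qed.

Lemma Za_neq (n : nat) : (1 : ZaG n) <> (0 : ZaG n).
Proof. by move/(congr1 val) => /=; rewrite modn_small. Qed.

Lemma Za_exists (a : nat) : (2 <= a)%coq_nat -> exists (H : Defs.Group) (h1 h2 : H),
  gpow h1 a = gpow h2 a /\ h1 <> h2 /\ (forall u v : H, gmul u v = gmul v u).
Proof.
move=> ha; have [n ->] : exists n, a = n.+2.
  by exists (a - 2)%N; move/leP: ha => ha; rewrite -addn2 subnK.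
exists (ZaG n), 1, 0; split; first exact: Za_full.
split; first exact: Za_neq.
by move=> u v; apply: addrC.
Qed.
End ZaMod.

From Stdlib Require Import Classical Lia.
Import ListNotations.

Section Grp.
Context {G : Group}.
Local Infix "·" := gmul (at level 40, left associativity).

Lemma mVK (a b : G) : ginv a · (a · b) = b.
Proof. rewrite gmul_assoc, gmul_Vl, gmul_1l; reflexivity. Qed.
Lemma mKV (a b : G) : a · (ginv a · b) = b.
Proof. rewrite gmul_assoc, gmul_Vr, gmul_1l; reflexivity. Qed.
Lemma mulKr (a b : G) : a · b · ginv b = a.
Proof. rewrite <- gmul_assoc, gmul_Vr, gmul_1r; reflexivity. Qed.
Lemma mulVKr (a b : G) : a · ginv b · b = a.
Proof. rewrite <- gmul_assoc, gmul_Vl, gmul_1r; reflexivity. Qed.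
Lemma cancel_l (a b c : G) : a · b = a · c -> b = c.
Proof. intro H. rewrite <- (mVK a b), H, mVK. reflexivity. Qed.
Lemma inv_uniq (a b : G) : a · b = gone -> b = ginv a.
Proof. intro H. apply (cancel_l a). rewrite H, gmul_Vr. reflexivity. Qed.
Lemma inv_inv (a : G) : ginv (ginv a) = a.
Proof. symmetry. apply inv_uniq. apply gmul_Vl. Qed.
Lemma inv_mul (a b : G) : ginv (a · b) = ginv b · ginv a.
Proof. symmetry. apply inv_uniq. rewrite <- gmul_assoc, mKV, gmul_Vr. reflexivity. Qed.
Lemma inv_one : ginv (@gone G) = gone.
Proof. symmetry. apply inv_uniq. apply gmul_1l. Qed.

Lemma gpow_comm (g : G) n : g · gpow g n = gpow g n · g.
Proof.
  induction n as [|n IH]; simpl. rewrite gmul_1l, gmul_1r; reflexivity.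
  rewrite <- gmul_assoc, <- IH. reflexivity.
Qed.
Lemma gpow_add (g : G) m n : gpow g (m + n) = gpow g m · gpow g n.
Proof.
  induction m as [|m IH]; simpl. rewrite gmul_1l; reflexivity.
  rewrite IH, gmul_assoc. reflexivity.
Qed.

Lemma gprod_ones (u z : G) k : u · z = gone ->
  gprod (concat (repeat [u; z] k)) = gone.
Proof.
  intro H. induction k as [|k IH]; simpl. reflexivity.
  rewrite IH, gmul_1r. exact H.
Qed.

Lemma atomic_unit (M : G -> Prop) : atomic M -> M gone ->
  forall u z, M u -> M z -> u · z = gone -> u = gone.
Proof.
  intros HA H1 u z Hu Hz Huz. apply NNPP. intro Hne.
  destruct (HA gone H1) as [N HN].
  assert (Hz1 : z <> gone).
  { intro E. subst z. rewrite gmul_1r in Huz. contradiction. }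
  assert (L := HN (concat (repeat [u; z] (S N)))).
  assert (Hlen : forall k, length (concat (repeat [u; z] k)) = 2 * k).
  { induction k as [|k IH]; simpl. reflexivity. rewrite IH. lia. }
  rewrite Hlen in L.
  assert (2 * S N <= N); [|lia].
  apply L; [|apply gprod_ones; exact Huz].
  intros w Hw. apply in_concat in Hw. destruct Hw as [l0 [Hl0 Hw]].
  apply repeat_spec in Hl0. subst l0. simpl in Hw.
  destruct Hw as [<-|[<-|[]]]; split; assumption.
Qed.

End Grp.

Section Gars.
Context {G : Group}.
Local Infix "·" := gmul (at level 40, left associativity).
Variables (M : G -> Prop) (x : G).
Hypothesis H1 : M gone.
Hypothesis Hx : M x.
Hypothesis HM : forall p q, M p -> M q -> M (p · q).
Hypothesis Hiff : forall p, left_div M p x <-> right_div M p x.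
Hypothesis Hgen : forall m, M m -> exists l : list G,
      (forall z, In z l -> left_div M z x) /\ gprod l = m.

Definition sig (g : G) := ginv x · g · x.
Definition sigi (g : G) := x · g · ginv x.

Lemma sig_div p : left_div M p x -> M (sig p).
Proof.
  intro Hp. destruct Hp as [Mp [c [Mc Hpc]]].
  assert (Hc : left_div M c x). { apply Hiff. split; [exact Mc|]. exists p. auto. }
  destruct Hc as [_ [d [Md Hcd]]].
  replace (sig p) with d; [exact Md|].
  assert (Ec: c = ginv p · x) by (rewrite <- Hpc, mVK; reflexivity).
  assert (Ed: d = ginv c · x) by (rewrite <- Hcd, mVK; reflexivity).
  unfold sig. rewrite Ed, Ec, inv_mul, inv_inv, <- !gmul_assoc. reflexivity.
Qed.

Lemma sigi_div p : left_div M p x -> M (sigi p).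
Proof.
  intro Hp. apply Hiff in Hp. destruct Hp as [Mp [e [Me Hep]]].
  assert (He : right_div M e x). { apply Hiff. split; [exact Me|]. exists p. auto. }
  destruct He as [_ [g [Mg Hge]]].
  replace (sigi p) with g; [exact Mg|].
  assert (Ee: e = x · ginv p) by (rewrite <- Hep, mulKr; reflexivity).
  assert (Eg: g = x · ginv e) by (rewrite <- Hge, mulKr; reflexivity).
  unfold sigi. rewrite Eg, Ee, inv_mul, inv_inv, <- !gmul_assoc. reflexivity.
Qed.

Lemma sig_mul a b : sig (a · b) = sig a · sig b.
Proof. unfold sig. rewrite <- !gmul_assoc, mKV. reflexivity. Qed.
Lemma sigi_mul a b : sigi (a · b) = sigi a · sigi b.
Proof. unfold sigi. rewrite <- !gmul_assoc, mVK. reflexivity. Qed.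
Lemma sig_one : sig gone = gone.
Proof. unfold sig. rewrite gmul_1r, gmul_Vl. reflexivity. Qed.
Lemma sigi_one : sigi gone = gone.
Proof. unfold sigi. rewrite gmul_1r, gmul_Vr. reflexivity. Qed.

Lemma sig_M m : M m -> M (sig m).
Proof.
  intro Hm. destruct (Hgen m Hm) as [l [Hl <-]]. clear Hm.
  induction l as [|z l IH]; simpl. rewrite sig_one; exact H1.
  rewrite sig_mul. apply HM. apply sig_div, Hl; left; reflexivity.
  apply IH. intros w Hw; apply Hl; right; exact Hw.
Qed.
Lemma sigi_M m : M m -> M (sigi m).
Proof.
  intro Hm. destruct (Hgen m Hm) as [l [Hl <-]]. clear Hm.
  induction l as [|z l IH]; simpl. rewrite sigi_one; exact H1.
  rewrite sigi_mul. apply HM. apply sigi_div, Hl; left; reflexivity.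
  apply IH. intros w Hw; apply Hl; right; exact Hw.
Qed.

Definition sigk k (g : G) := ginv (gpow x k) · g · gpow x k.
Definition sigik k (g : G) := gpow x k · g · ginv (gpow x k).

Lemma sigk_M k : forall m, M m -> M (sigk k m).
Proof.
  induction k as [|k IH]; intros m Hm; unfold sigk in *; simpl.
  rewrite inv_one, gmul_1l, gmul_1r; exact Hm.
  replace (ginv (x · gpow x k) · m · (x · gpow x k)) with
    (ginv (gpow x k) · sig m · gpow x k).
  apply IH, sig_M, Hm.
  unfold sig. rewrite inv_mul, <- !gmul_assoc. reflexivity.
Qed.
Lemma sigik_M k : forall m, M m -> M (sigik k m).
Proof.
  induction k as [|k IH]; intros m Hm; unfold sigik in *; simpl.
  rewrite inv_one, gmul_1l, gmul_1r; exact Hm.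
  replace (x · gpow x k · m · ginv (x · gpow x k)) with
    (sigi (gpow x k · m · ginv (gpow x k))).
  apply sigi_M, IH, Hm.
  unfold sigi. rewrite inv_mul, <- !gmul_assoc. reflexivity.
Qed.

Lemma divpow m : M m -> exists k c, M c /\ m · c = gpow x k.
Proof.
  intro Hm. destruct (Hgen m Hm) as [l [Hl <-]]. clear Hm. exists (length l).
  induction l as [|z l IH]; simpl.
  exists gone. split; [exact H1|]. apply gmul_1l.
  destruct IH as [c' [Mc' Hc']]. intros w Hw; apply Hl; right; exact Hw.
  destruct (Hl z (or_introl eq_refl)) as [_ [c0 [Mc0 Hzc0]]].
  exists (c' · sigk (length l) c0). split.
  apply HM; [exact Mc'|]. apply sigk_M, Mc0.
  unfold sigk. rewrite <- !gmul_assoc, (gmul_assoc _ (gprod l) c'), Hc', mKV.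
  rewrite gmul_assoc, Hzc0. reflexivity.
Qed.

Hypothesis Hfrac : forall g : G, exists p q, M p /\ M q /\ g = p · ginv q.

Lemma shift h : exists n, M (gpow x n · h).
Proof.
  destruct (Hfrac h) as [p [q [Mp [Mq ->]]]].
  destruct (divpow q Mq) as [k [c [Mc Hqc]]].
  exists k.
  assert (E : ginv q = c · ginv (gpow x k)).
  { rewrite <- Hqc, inv_mul, mKV. reflexivity. }
  rewrite E. replace (gpow x k · (p · (c · ginv (gpow x k))))
    with (sigik k (p · c)). apply sigik_M, HM; assumption.
  unfold sigik. rewrite <- !gmul_assoc. reflexivity.
Qed.

Lemma shift_mono n j h : M (gpow x n · h) -> M (gpow x (j + n) · h).
Proof.
  intro H. rewrite gpow_add, <- gmul_assoc. apply HM; [|exact H].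
  clear H. induction j as [|j IH]; simpl. exact H1.
  apply HM; [exact Hx|exact IH].
Qed.

Lemma shift_list (l : list G) : exists n, forall h, In h l -> M (gpow x n · h).
Proof.
  induction l as [|h l IH].
  exists 0. intros h [].
  destruct IH as [n1 Hn1]. destruct (shift h) as [n0 Hn0].
  exists (n1 + n0). intros w [<-|Hw].
  apply shift_mono; exact Hn0.
  rewrite Nat.add_comm. apply shift_mono, Hn1, Hw.
Qed.

Lemma ld_trans p q r : left_div M p q -> left_div M q r -> left_div M p r.
Proof.
  intros [Mp [c1 [Mc1 E1]]] [_ [c2 [Mc2 E2]]].
  split; [exact Mp|]. exists (c1 · c2). split. apply HM; assumption.
  rewrite gmul_assoc, E1. exact E2.
Qed.

Hypothesis Hlat : is_lattice M (left_div M).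

Lemma lcm_list (l : list G) : (forall h, In h l -> M h) -> exists J, M J /\ (forall h, In h l -> left_div M h J) /\ (forall e, M e -> (forall h, In h l -> left_div M h e) -> left_div M J e).
Proof.
  induction l as [|h l IH]; intro Hl.
  - exists gone. split; [exact H1|]. split. intros h [].
    intros e Me _. split; [exact H1|]. exists e. split; [exact Me|]. apply gmul_1l.
  - destruct IH as [J [MJ [HJ1 HJ2]]]. intros w Hw; apply Hl; right; exact Hw.
    destruct (Hlat h J (Hl h (or_introl eq_refl)) MJ) as [_ [K [MK [HK1 [HK2 HK3]]]]].
    exists K. split; [exact MK|]. split.
    + intros w [<-|Hw]. exact HK1. apply (ld_trans _ J); auto.
    + intros e Me He. apply HK3; auto. apply He; left; reflexivity.
      apply HJ2; auto. intros w Hw; apply He; right; exact Hw.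
Qed.

Hypothesis HA : atomic M.
Variables (y : G) (a : nat).
Hypothesis Ha : 1 <= a.
Hypothesis Hya : gpow y a = gpow x a.
Hypothesis Hcent : forall g, gpow x a · g = g · gpow x a.

Definition T (g : G) := y · g · ginv x.
Definition orb i := gpow y i · ginv (gpow x i).

Lemma Tstep i : T (orb i) = orb (S i).
Proof. unfold T, orb. simpl. rewrite inv_mul, <- !gmul_assoc. reflexivity. Qed.

Lemma orb0 : orb 0 = gone.
Proof. unfold orb. simpl. rewrite inv_one, gmul_1l. reflexivity. Qed.

Lemma orba : orb a = gone.
Proof. unfold orb. rewrite Hya, gmul_Vr. reflexivity. Qed.

Lemma conj_xy : conjugate x y.
Proof.
  set (O := map orb (seq 0 a)).
  assert (HO : forall o, In o O <-> exists i, i < a /\ o = orb i).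
  { intro o. unfold O. rewrite in_map_iff. split.
    - intros [i [<- Hi]]. apply in_seq in Hi. exists i. split; [lia|reflexivity].
    - intros [i [Hi ->]]. exists i. split; [reflexivity|]. apply in_seq. lia. }
  assert (Hsurj : forall o', In o' O -> exists o, In o O /\ T o = o').
  { intros o' Ho'. apply HO in Ho'. destruct Ho' as [j [Hj ->]].
    destruct j as [|j].
    - exists (orb (a - 1)). split. apply HO. exists (a - 1). split; [lia|reflexivity].
      rewrite Tstep. replace (S (a - 1)) with a by lia. rewrite orba, orb0. reflexivity.
    - exists (orb j). split. apply HO. exists j. split; [lia|reflexivity]. apply Tstep. }
  destruct (shift_list O) as [n Hn].
  set (X := gpow x n).
  destruct (lcm_list (map (fun h => X · h) O)) as [J [MJ [HJ1 HJ2]]].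
  { intros h Hh. apply in_map_iff in Hh. destruct Hh as [o [<- Ho]]. apply Hn, Ho. }
  set (L := ginv X · J).
  assert (HL : forall o, In o O -> M (ginv o · L)).
  { intros o Ho. assert (Hd := HJ1 (X · o) (in_map _ _ _ Ho)).
    destruct Hd as [_ [c [Mc Ec]]].
    replace (ginv o · L) with c; [exact Mc|].
    unfold L. rewrite <- Ec, <- !gmul_assoc, mVK, mVK. reflexivity. }
  assert (HTL : forall o', In o' O -> M (ginv o' · T L)).
  { intros o' Ho'. destruct (Hsurj o' Ho') as [o [Ho <-]].
    replace (ginv (T o) · T L) with (sigi (ginv o · L)).
    apply sigi_M, HL, Ho.
    unfold T, sigi. rewrite !inv_mul, inv_inv, <- !gmul_assoc, mVK. reflexivity. }
  assert (HO0 : In gone O). { apply HO. exists 0. split; [lia|]. symmetry; apply orb0. }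
  assert (Me : M (X · T L)).
  { replace (X · T L) with ((X · gone) · (ginv gone · T L)).
    apply HM. apply Hn, HO0. apply HTL, HO0.
    rewrite inv_one, gmul_1l, gmul_1r. reflexivity. }
  assert (Hle : left_div M J (X · T L)).
  { apply HJ2; [exact Me|]. intros h Hh. apply in_map_iff in Hh.
    destruct Hh as [o [<- Ho]]. split. apply Hn, Ho.
    exists (ginv o · T L). split. apply HTL, Ho.
    rewrite <- gmul_assoc, mKV. reflexivity. }
  destruct Hle as [_ [c [Mc Ec]]].
  assert (Mu : M (ginv L · T L)).
  { replace (ginv L · T L) with c; [exact Mc|].
    assert (EL : ginv L = ginv J · X) by (unfold L; rewrite inv_mul, inv_inv; reflexivity).
    rewrite EL, <- gmul_assoc, <- Ec, mVK. reflexivity. }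
  set (v := ginv L · y · L).
  assert (Euv : ginv L · T L = v · ginv x).
  { unfold T, v. rewrite <- !gmul_assoc. reflexivity. }
  assert (Hvpow : forall k, gpow v k = ginv L · gpow y k · L).
  { induction k as [|k IH]; simpl. rewrite gmul_1r, gmul_Vl. reflexivity.
    rewrite IH. unfold v. rewrite <- !gmul_assoc, mKV. reflexivity. }
  set (P := fun k => gpow v k · ginv (gpow x k)).
  assert (HP : forall k, P (S k) = (ginv L · T L) · sigi (P k)).
  { intro k. unfold P, sigi. rewrite Euv. simpl.
    rewrite inv_mul, <- !gmul_assoc, mVK. reflexivity. }
  assert (MP : forall k, M (P k)).
  { induction k as [|k IH]. unfold P. simpl. rewrite inv_one, gmul_1l. exact H1.
    rewrite HP. apply HM. exact Mu. apply sigi_M, IH. }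
  assert (Pa : P a = gone).
  { unfold P. rewrite Hvpow, Hya, <- !gmul_assoc, (gmul_assoc _ (gpow x a) L), Hcent.
    rewrite <- !gmul_assoc, mVK, gmul_Vr. reflexivity. }
  destruct a as [|a'] eqn:Ea; [lia|].
  rewrite HP in Pa.
  assert (Hu1 : ginv L · T L = gone).
  { apply (atomic_unit M HA H1 _ (sigi (P a'))). exact Mu. apply sigi_M, MP. exact Pa. }
  rewrite Euv in Hu1.
  assert (Hvx : v = x).
  { assert (E := inv_uniq _ _ Hu1). rewrite <- (inv_inv x), E, inv_inv. reflexivity. }
  exists (ginv L). rewrite inv_inv, <- Hvx. unfold v.
  rewrite <- !gmul_assoc, mKV, gmul_Vr, gmul_1r. reflexivity.
Qed.

End Gars.

Lemma hom_one (G H : Group) (f : G -> H) : is_hom f -> f gone = gone.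
Proof.
  intro Hf. apply (cancel_l (f gone)). rewrite <- Hf, !gmul_1r. reflexivity.
Qed.

Lemma central_pow (a : nat) (G : Group) (x y : G) : gpow x a = gpow y a ->
  forall g, in_gen (fun s => s = x \/ s = y) g -> gmul (gpow x a) g = gmul g (gpow x a).
Proof.
  intros E g Hg. induction Hg as [|s [->| ->]|g h _ IHg _ IHh|g _ IH].
  - rewrite gmul_1l, gmul_1r. reflexivity.
  - symmetry. apply gpow_comm.
  - rewrite E. symmetry. apply gpow_comm.
  - rewrite gmul_assoc, IHg, <- gmul_assoc, IHh, gmul_assoc. reflexivity.
  - apply (cancel_l g). rewrite gmul_assoc, <- IH, <- gmul_assoc, gmul_Vr, gmul_1r,
      gmul_assoc, gmul_Vr, gmul_1l. reflexivity.
Qed.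

Theorem mainTheorem7 (a : nat) (ha : 2 <= a) (G : Group) (x y : G)
  (hG : is_presentation a x y) :
  ~ conjugate x y /\ ~ (exists M : G -> Prop, garside_structure M x).
Proof.
  destruct hG as [Exy [Hgen Huniv]].
  assert (Hi : ~ conjugate x y).
  { intros [c Hc].
    destruct (ZaMod.Za_exists a ha) as [H [h1 [h2 [E [Hne Hcomm]]]]].
    destruct (Huniv H h1 h2 E) as [f [Hf [Fx Fy]]].
    apply Hne. rewrite <- Fx, <- Fy, <- Hc, !Hf, Hcomm, <- gmul_assoc.
    rewrite (Hcomm (f c)), <- Hf, gmul_Vl, hom_one by exact Hf.
    rewrite gmul_1r. reflexivity. }
  split; [exact Hi|].
  intros [M [[H1 HM] [Hfrac [HA [Hlat [_ [Hx [Hiff [_ Hgn]]]]]]]]].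
  apply Hi. apply (conj_xy M x H1 Hx HM Hiff Hgn Hfrac Hlat HA y a).
  - lia.
  - symmetry; exact Exy.
  - intro g. apply (central_pow a G x y Exy g (Hgen g)).
Qed.
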